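(* For an ideal $\mathcal{I}$ on $\omega$, the following are equivalent: (1) Player I does not have a winning strategy in the tallness* game with respect to $\mathcal{I}$; (2) for every sequence $\langle X_n:n\in\omega\rangle$ of elements of $\mathcal{I}^+$ there is $I\in\mathcal{I}$ such that $I\cap X_n$ is infinite for every $n\in\omega$.
   Context: Ideals on $\omega$ are assumed to contain all finite sets; $\mathcal{I}^+=\mathcal{P}(\omega)\setminus\mathcal{I}$. Tallness* game with respect to $\mathcal{I}$: at round $k$, Player I plays $n_k\in\omega$ with $n_0<n_1<\cdots$, then Player II plays $i_k\in\{0,1\}$. Player II wins iff either $\{n_k:k\in\omega\}\in\mathcal{I}$, or ($\{n_k:k\in\omega\}\in\mathcal{I}^+$ and $\{n_k:i_k=1\}$ is infinite and belongs to $\mathcal{I}$). *)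

(* Defs.v *)
From mathcomp Require Import all_boot.
Set Implicit Arguments. Unset Strict Implicit. Unset Printing Implicit Defensive.

Definition nset := nat -> Prop.

Definition subset_nat (A B : nset) : Prop := forall n, A n -> B n.

Definition finite_nat (A : nset) : Prop := exists m, forall n, A n -> n < m.
Definition infinite_nat (A : nset) : Prop := ~ finite_nat A.

Record is_ideal (I : nset -> Prop) : Prop := {
  ideal_fin   : forall A, finite_nat A -> I A;
  ideal_sub   : forall A B, I B -> subset_nat A B -> I A;
  ideal_union : forall A B, I A -> I B -> I (fun n => A n \/ B n);
  ideal_proper : ~ I (fun _ => True) }.

Definition positive (I : nset -> Prop) (X : nset) : Prop := ~ I X.

(* A strategy for Player I in the tallness* game: the k-th move of Player I
   as a function of the k previous moves of Player II. *)
Definition stratI := seq bool -> nat.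

Definition legal_stratI (sigma : stratI) : Prop :=
  forall (s : seq bool) (b : bool), sigma s < sigma (rcons s b).

Definition playI (sigma : stratI) (i : nat -> bool) (k : nat) : nat :=
  sigma (mkseq i k).

Definition played_set (sigma : stratI) (i : nat -> bool) : nset :=
  fun n => exists k, playI sigma i k = n.

Definition chosen_set (sigma : stratI) (i : nat -> bool) : nset :=
  fun n => exists k, i k = true /\ playI sigma i k = n.

Definition II_wins (I : nset -> Prop) (sigma : stratI) (i : nat -> bool) : Prop :=
  I (played_set sigma i) \/
  (positive I (played_set sigma i) /\
   infinite_nat (chosen_set sigma i) /\ I (chosen_set sigma i)).

Definition I_has_winning_strategy (I : nset -> Prop) : Prop :=
  exists sigma : stratI, legal_stratI sigma /\
    forall i : nat -> bool, ~ II_wins I sigma i.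

(* Main.v *)
Require Import Defs.
From mathcomp Require Import all_boot zify.
From Stdlib Require Import Lia Classical ClassicalEpsilon.

Lemma phi_ok n M : exists m, M <= m /\ logn 2 m = n.
Proof.
exists (2^n * (2*M).+1); split.
  apply: leq_trans (_ : (2*M).+1 <= _); first by lia.
  by rewrite leq_pmull // expn_gt0.
rewrite lognM ?expn_gt0 // pfactorK // logn_coprime ?addn0 //.
by rewrite coprime2n /= mul2n odd_double.
Qed.

Definition dec (P : Prop) : bool :=
  if excluded_middle_informative P then true else false.

Lemma decP P : dec P = true <-> P.
Proof. by rewrite /dec; case: excluded_middle_informative. Qed.

Lemma least_ex (A : nset) m : (exists k, m < k /\ A k) ->
  exists k, (m < k /\ A k) /\ forall j, m < j -> A j -> k <= j.
Proof.
move=> [k0 Hk0]; apply: NNPP => Hn.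
have H : forall N k, k < N -> ~ (m < k /\ A k).
  elim=> [//|N IH] k; rewrite ltnS leq_eqVlt => /orP [/eqP -> | /IH //].
  move=> HN; apply: Hn; exists N; split=> // j Hj Aj.
  by case: (leqP N j) => // /IH; case.
by apply: (H k0.+1 k0).
Qed.

Definition lnext (A : nset) (m : nat) : nat :=
  match excluded_middle_informative
    (exists k, (m < k /\ A k) /\ forall j, m < j -> A j -> k <= j) with
  | left e => proj1_sig (constructive_indefinite_description _ e)
  | right _ => m.+1
  end.

Lemma lnext_gt A m : m < lnext A m.
Proof.
rewrite /lnext; case: excluded_middle_informative => // e.
by case: constructive_indefinite_description => k [[]].
Qed.

Lemma lnext_spec A m : (exists k, m < k /\ A k) ->
  A (lnext A m) /\ forall j, m < j -> A j -> lnext A m <= j.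
Proof.
move=> /least_ex e; rewrite /lnext; case: excluded_middle_informative => // e'.
by case: constructive_indefinite_description => k [[]].
Qed.

Lemma legal_mono (s : stratI) (i : nat -> bool) k l :
  legal_stratI s -> k < l -> playI s i k < playI s i l.
Proof.
move=> leg; elim: l => [//|l IH]; rewrite ltnS leq_eqVlt => /orP [/eqP ->|/IH h].
  by rewrite /playI mkseqS.
by apply: (ltn_trans h); rewrite /playI mkseqS.
Qed.

Lemma legal_ge (s : stratI) (i : nat -> bool) k :
  legal_stratI s -> k <= playI s i k.
Proof.
move=> leg; elim: k => [//|k IH].
by apply: (leq_ltn_trans IH); apply: legal_mono.
Qed.

Fixpoint fII (s : stratI) (J : nset) (k : nat) : seq bool :=
  match k with
  | 0 => [::]
  | k'.+1 => rcons (fII s J k') (dec (J (s (fII s J k'))))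
  end.

Lemma mkseq_pad (s : seq bool) j :
  mkseq (nth false s) (size s + j) = s ++ nseq j false.
Proof.
elim: j => [|j IH]; first by rewrite addn0 cats0 mkseq_nth.
rewrite addnS mkseqS IH nth_default ?leq_addr // rcons_cat.
congr (_ ++ _); by elim: j {IH} => //= j ->.
Qed.

Lemma dirA (I : nset -> Prop) (hI : is_ideal I) :
  (forall X : nat -> nset, (forall n, positive I (X n)) ->
     exists J : nset, I J /\
       forall n, infinite_nat (fun m => J m /\ X n m)) ->
  ~ I_has_winning_strategy I.
Proof.
move=> H2 [sg [leg win]].
pose Xs := fun s : seq bool => fun n => exists j, sg (s ++ nseq j false) = n.
have posXs : forall s, positive I (Xs s).
  move=> s HI; apply: (win (fun k => nth false s k)); left.
  apply: (ideal_sub hI (B := fun n => Xs s n \/ n < sg s)).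
    apply: (ideal_union hI) => //; apply: (ideal_fin hI); by exists (sg s).
  move=> n [k <-]; case: (leqP (size s) k) => hk.
    left; exists (k - size s); rewrite -mkseq_pad subnKC //.
  right; move: (legal_mono sg (fun k => nth false s k) k (size s) leg hk).
  by rewrite {2}/playI mkseq_nth.
pose Xn := fun n => if unpickle n is Some s then Xs s else (fun _ : nat => True).
have [J [HJ Jinf]] : exists J : nset, I J /\
       forall n, infinite_nat (fun m => J m /\ Xn n m).
  apply: H2 => n; rewrite /Xn; case: unpickle => [s|]; [exact: posXs | exact: (ideal_proper hI)].
have ne : forall s, exists j, J (sg (s ++ nseq j false)).
  move=> s; apply: NNPP => hn; apply: (Jinf (pickle s)); exists 0.
  move=> m; rewrite /Xn pickleK => -[Jm [j Hj]]; case: hn; exists j; by rewrite Hj.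
pose i := fun k => dec (J (sg (fII sg J k))).
have Hmk : forall k, mkseq i k = fII sg J k.
  by elim=> [//|k IH]; rewrite mkseqS IH.
have Hpl : forall k, playI sg i k = sg (fII sg J k) by move=> k; rewrite /playI Hmk.
have key : forall M, exists k, M <= k /\ i k.
  move=> M; have [j Hj] := ne (fII sg J M).
  elim: j M Hj => [|j IH] M Hj.
    by exists M; split=> //; apply/decP; rewrite cats0 in Hj.
  case iM : (i M); first by exists M.
  have [k [hk ik]] : exists k, M.+1 <= k /\ i k.
    by apply: IH; move: Hj; rewrite /= -/(i M) iM cat_rcons.
  by exists k; split=> //; apply: ltnW.
apply: (win i).
case: (classic (I (played_set sg i))) => hP; first by left.
right; split=> //; split.
  move=> [m Hm]; have [k [hk ik]] := key m.
  have := Hm (playI sg i k) (ex_intro _ k (conj ik erefl)).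
  by move: (legal_ge sg i k leg); lia.
apply: (ideal_sub hI HJ) => n [k [ik <-]]; rewrite Hpl; exact/decP.
Qed.

Fixpoint hh (Y : nat -> nset) (r : seq bool) : nat :=
  match r with
  | [::] => lnext (Y 0) 0
  | b :: r' => lnext (Y (count id r)) (hh Y r')
  end.

Lemma count_rcons1 (s : seq bool) b : count id (rcons s b) = count id s + b.
Proof. by rewrite -cats1 count_cat /= addn0. Qed.

Lemma hh_rcons Y s b :
  hh Y (rev (rcons s b)) = lnext (Y (count id (rcons s b))) (hh Y (rev s)).
Proof. by rewrite rev_rcons /= count_rev count_rcons1 addnC. Qed.

Lemma dirB (I : nset -> Prop) (hI : is_ideal I) :
  ~ I_has_winning_strategy I ->
  (forall X : nat -> nset, (forall n, positive I (X n)) ->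
     exists J : nset, I J /\
       forall n, infinite_nat (fun m => J m /\ X n m)).
Proof.
move=> nW X Xpos; apply: NNPP => Hno; apply: nW.
have almost : forall J, I J -> exists n, finite_nat (fun m => J m /\ X n m).
  move=> J HJ; apply: NNPP => hn; apply: Hno; exists J; split=> // n hf.
  by apply: hn; exists n.
pose Y := fun m => X (logn 2 m).
have Yinf : forall m b, exists k, b < k /\ Y m k.
  move=> m b; apply: NNPP => hn; apply: (Xpos (logn 2 m)); apply: (ideal_fin hI).
  exists b.+1 => k Hk; case: (leqP k b) => // hk; case: hn; by exists k.
pose sg : stratI := fun s => hh Y (rev s).
have sg_r : forall s b, sg (rcons s b) = lnext (Y (count id (rcons s b))) (sg s).
  by move=> s b; rewrite /sg hh_rcons.
exists sg; split.
  by move=> s b; rewrite sg_r; apply: lnext_gt.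
move=> i.
pose c := fun k => count id (mkseq i k).
have cS : forall k, c k.+1 = c k + i k by move=> k; rewrite /c mkseqS count_rcons1.
have pS : forall k, playI sg i k.+1 = lnext (Y (c k.+1)) (playI sg i k).
  by move=> k; rewrite /playI /c mkseqS sg_r.
have pY : forall k, Y (c k) (playI sg i k).
  case=> [|k]; first by rewrite /playI /c /sg /=; exact: (proj1 (lnext_spec _ _ (Yinf 0 0))).
  by rewrite pS; exact: (proj1 (lnext_spec _ _ (Yinf _ _))).
have leg : legal_stratI sg by move=> s b; rewrite sg_r; apply: lnext_gt.
have cmono : forall k l, k <= l -> c k <= c l.
  move=> k l /subnKC <-; elim: (l - k) => [|d IH]; first by rewrite addn0.
  by rewrite addnS cS; apply: (leq_trans IH); apply: leq_addr.
have cle : forall k, c k <= k.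
  by move=> k; rewrite /c; apply: (leq_trans (count_size _ _)); rewrite size_mkseq.
have ivt : forall m k, m < c k -> exists k0, c k0 = m /\ i k0.
  move=> m; elim=> [//|k IH]; rewrite cS.
  case: (ltnP m (c k)) => [/IH //|h1 h2].
  exists k; move: h1 h2; case: (i k); [split=> //; lia| rewrite addn0; lia].
case: (classic (finite_nat (chosen_set sg i))) => [[B HB]|Cinf].
  move=> [HP|[_ [hinf _]]]; last by apply: hinf; exists B.
  have iB : forall k, B <= k -> i k = false.
    move=> k hk; case ik : (i k) => //.
    have := HB (playI sg i k) (ex_intro _ k (conj ik erefl)).
    by move: (legal_ge sg i k leg); lia.
  have cB : forall k, B <= k -> c k = c B.
    move=> k /subnKC <-; elim: (k - B) => [|d IH]; first by rewrite addn0.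
    by rewrite addnS cS IH iB ?addn0 // leq_addr.
  set m := c B.
  have cover : forall x, Y m x -> playI sg i B < x -> played_set sg i x.
    move=> x Yx; suff H : forall d k, B <= k -> playI sg i k < x ->
        x - playI sg i k <= d -> played_set sg i x.
      by move=> h; apply: (H x B) => //; lia.
    elim=> [|d IH] k hk hx hd; first by lia.
    have hle : playI sg i k.+1 <= x.
      rewrite pS cB //; last by apply: (leq_trans hk).
      by apply: (proj2 (lnext_spec _ _ (Yinf _ _))).
    case: (ltnP (playI sg i k.+1) x) => h.
      apply: (IH k.+1) => //; first by apply: (leq_trans hk).
      have := legal_mono sg i k k.+1 leg (ltnSn k); lia.
    by exists k.+1; apply/eqP; rewrite eqn_leq hle h.
  apply: (Xpos (logn 2 m)).
  apply: (ideal_sub hI (B := fun x => played_set sg i x \/ x < (playI sg i B).+1)).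
    by apply: (ideal_union hI) => //; apply: (ideal_fin hI); exists (playI sg i B).+1.
  move=> x Xx; case: (ltnP (playI sg i B) x) => h; [left; exact: cover | by right].
have notIC : ~ I (chosen_set sg i).
  move=> HC; have [n [B HB]] := almost _ HC.
  have [m [hm hmn]] := phi_ok n B.
  have unb : forall m, exists k, m <= c k.
    elim=> [|m' [k hk]]; first by exists 0.
    have [x [[k' [ik' <-]] hx]] : exists x, chosen_set sg i x /\ playI sg i k <= x.
      apply: NNPP => hn; apply: Cinf; exists (playI sg i k) => x Cx.
      by case: (ltnP x (playI sg i k)) => // h; case: hn; exists x.
    have hkk : k <= k'.
      case: (leqP k k') => // h; have := legal_mono sg i k' k leg h; lia.
    exists k'.+1; rewrite cS ik' addn1; apply: (leq_ltn_trans hk).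
    by rewrite ltnS; apply: cmono.
  have [k [ck ik]] : exists k, c k = m /\ i k.
    have [k hk] := unb m.+1; exact: (ivt m k hk).
  have := HB (playI sg i k) (conj (ex_intro _ k (conj ik erefl)) _).
  rewrite -hmn -ck; move=> /(_ (pY k)).
  have := legal_ge sg i k leg; have := cle k; lia.
move=> [HP|[_ [_ HC]]]; last exact: notIC.
apply: notIC; apply: (ideal_sub hI HP) => x [k [_ <-]]; by exists k.
Qed.

Theorem mainTheorem15 (I : nset -> Prop) (hI : is_ideal I) :
  ~ I_has_winning_strategy I <->
  (forall X : nat -> nset, (forall n, positive I (X n)) ->
     exists J : nset, I J /\
       forall n, infinite_nat (fun m => J m /\ X n m)).
Proof. split; [exact: dirB | exact: dirA]. Qed.
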